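(* There exists a sequence $(S_i)_{i=1}^\infty$ of functions, each submultiplicative on $[1,\infty)$, such that for every nonempty finite set $A\subset\mathbb N$ and every $j\in\mathbb N\setminus A$, $$\sup_{n\ge1}\frac{S_j(n)}{\max_{i\in A}S_i(n)}=\infty.$$
   Context: Let $2\le n_0\le\infty$ and let $S$ be a real-valued function on $[1,n_0]$ (on $[1,\infty)$ if $n_0=\infty$). $S$ is called submultiplicative on $[1,n_0]$ if: (a) $S$ is piecewise-linear, continuous, strictly increasing and concave; (b) $S(x)=x$ for $1\le x\le 2$; (c) $S(xy)\le S(x)S(y)$ for all $x,y$ with $1\le x,y,xy\le n_0$. *)

(* Defs.v *)
From Stdlib Require Import Reals List.
Open Scope R_scope.

Definition affine_on (f : R -> R) (a b : R) : Prop :=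
  exists c d : R, forall x, a <= x <= b -> f x = c * x + d.

Definition piecewise_linear_from (f : R -> R) (lo : R) : Prop :=
  forall M, lo <= M ->
    exists (k : nat) (t : nat -> R),
      t 0%nat = lo /\ t k = M /\
      forall i, (i < k)%nat -> t i < t (S i) /\ affine_on f (t i) (t (S i)).

Definition continuous_from (f : R -> R) (lo : R) : Prop :=
  forall x, lo <= x -> forall eps, 0 < eps ->
    exists delta, 0 < delta /\
      forall y, lo <= y -> Rabs (y - x) < delta -> Rabs (f y - f x) < eps.

Definition strictly_increasing_from (f : R -> R) (lo : R) : Prop :=
  forall x y, lo <= x -> x < y -> f x < f y.

Definition concave_from (f : R -> R) (lo : R) : Prop :=
  forall x y l, lo <= x -> lo <= y -> 0 <= l <= 1 ->
    l * f x + (1 - l) * f y <= f (l * x + (1 - l) * y).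

(* S is submultiplicative on [1, +oo) (the case n0 = infinity). *)
Definition submultiplicative_inf (S : R -> R) : Prop :=
  piecewise_linear_from S 1 /\ continuous_from S 1 /\
  strictly_increasing_from S 1 /\ concave_from S 1 /\
  (forall x, 1 <= x <= 2 -> S x = x) /\
  (forall x y, 1 <= x -> 1 <= y -> S (x * y) <= S x * S y).

(* max_{i in A} f i for a nonempty finite list A (0 for the empty list,
   never used). *)
Definition max_over (f : nat -> R) (A : list nat) : R :=
  match A with
  | nil => 0
  | a :: t => fold_right (fun i m => Rmax (f i) m) (f a) t
  end.

(* Main.v *)
Require Import Defs.
From Stdlib Require Import Reals List ZArith Lra Lia Psatz.
Open Scope R_scope.

Inductive PL (f : R -> R) : R -> R -> Prop :=
| PL_one : forall a b, a < b -> affine_on f a b -> PL f a b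
| PL_cat : forall a b c, PL f a b -> PL f b c -> PL f a c.

Lemma PL_lt f a b : PL f a b -> a < b.
Proof. induction 1; lra. Qed.

Lemma affine_ext f h a b : affine_on f a b -> (forall x, a <= x <= b -> f x = h x) -> affine_on h a b.
Proof. intros [c [d H]] E. exists c, d. intros x Hx. rewrite <- E by exact Hx. apply H; auto. Qed.

Lemma PL_ext f h a b : PL f a b -> (forall x, a <= x <= b -> f x = h x) -> PL h a b.
Proof.
  intros H; revert h; induction H as [a b Hab Haf | a b c H1 IH1 H2 IH2]; intros h E.
  - apply PL_one; auto. eapply affine_ext; eauto.
  - pose proof (PL_lt _ _ _ H1). pose proof (PL_lt _ _ _ H2).
    apply PL_cat with b; [apply IH1 | apply IH2]; intros x Hx; apply E; lra.
Qed.

Lemma caseF f a b c d p q : a < b -> (forall x, a<=x<=b -> f x = p*x+q) ->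
  (p-c)*a+(q-d) <= 0 -> (p-c)*b+(q-d) <= 0 -> PL (fun x => Rmin (f x) (c*x+d)) a b.
Proof.
  intros Hab Hf Ha Hb. apply PL_one; auto. exists p, q. intros x Hx.
  assert ((p-c)*x+(q-d) <= 0) by (destruct (Rle_dec 0 (p-c)); nra).
  rewrite Rmin_left; rewrite Hf by exact Hx; lra.
Qed.

Lemma caseL f a b c d p q : a < b -> (forall x, a<=x<=b -> f x = p*x+q) ->
  0 <= (p-c)*a+(q-d) -> 0 <= (p-c)*b+(q-d) -> PL (fun x => Rmin (f x) (c*x+d)) a b.
Proof.
  intros Hab Hf Ha Hb. apply PL_one; auto. exists c, d. intros x Hx.
  assert (0 <= (p-c)*x+(q-d)) by (destruct (Rle_dec 0 (p-c)); nra).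
  rewrite Rmin_right; rewrite ?Hf by exact Hx; lra.
Qed.

Lemma PL_min f a b c d : PL f a b -> PL (fun x => Rmin (f x) (c*x+d)) a b.
Proof.
  induction 1 as [a b Hab [p [q Hf]] | a b e H1 IH1 H2 IH2].
  2: { apply PL_cat with b; auto. }
  set (u := p - c). set (v := q - d).
  destruct (Rle_dec (u*a+v) 0) as [Ha|Ha]; destruct (Rle_dec (u*b+v) 0) as [Hb|Hb].
  - apply (caseF f a b c d p q); auto.
  - destruct (Req_dec (u*a+v) 0) as [Ha0|Ha0].
    + apply (caseL f a b c d p q); unfold u, v in *; auto; lra.
    + assert (Hu : u > 0) by nra.
      set (r := - v / u).
      assert (Hr : u * r = - v) by (unfold r; field; lra).
      assert (a < r) by nra. assert (r < b) by nra.
      apply PL_cat with r.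
      * apply (caseF f a r c d p q); unfold u, v in *; auto; try lra.
        intros; apply Hf; lra.
      * apply (caseL f r b c d p q); unfold u, v in *; auto; try lra.
        intros; apply Hf; lra.
  - destruct (Req_dec (u*b+v) 0) as [Hb0|Hb0].
    + apply (caseL f a b c d p q); unfold u, v in *; auto; lra.
    + assert (Hu : u < 0) by nra.
      set (r := - v / u).
      assert (Hr : u * r = - v) by (unfold r; field; lra).
      assert (a < r) by nra. assert (r < b) by nra.
      apply PL_cat with r.
      * apply (caseL f a r c d p q); unfold u, v in *; auto; try lra.
        intros; apply Hf; lra.
      * apply (caseF f r b c d p q); unfold u, v in *; auto; try lra.
        intros; apply Hf; lra.
  - apply (caseL f a b c d p q); unfold u, v in *; auto; lra.
Qed.

Lemma PL_to f a b : PL f a b -> exists (k : nat) (t : nat -> R), (1 <= k)%nat /\ t 0%nat = a /\ t k = b /\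
  forall i, (i < k)%nat -> t i < t (S i) /\ affine_on f (t i) (t (S i)).
Proof.
  induction 1 as [a b Hab Haf | a b c H1 [k1 [t1 [K1 [A1 [B1 C1]]]]] H2 [k2 [t2 [K2 [A2 [B2 C2]]]]]].
  - exists 1%nat, (fun i => if (i =? 0)%nat then a else b). simpl. split; [lia|].
    split; [auto|]. split; [auto|]. intros i Hi. assert (i = 0%nat) by lia. subst. simpl. auto.
  - set (t := fun i => if (i <=? k1)%nat then t1 i else t2 (i - k1)%nat).
    assert (Ti1 : forall i, (i <= k1)%nat -> t i = t1 i).
    { intros i Hi. unfold t. destruct (Nat.leb_spec i k1); [reflexivity | lia]. }
    assert (Ti2 : forall i, (k1 <= i)%nat -> t i = t2 (i - k1)%nat).
    { intros i Hi. unfold t. destruct (Nat.leb_spec i k1).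
      - assert (i = k1) by lia. subst. rewrite Nat.sub_diag. congruence.
      - reflexivity. }
    exists (k1 + k2)%nat, t. split; [lia|]. split; [rewrite Ti1 by lia; auto|].
    split; [rewrite Ti2 by lia; replace (k1 + k2 - k1)%nat with k2 by lia; auto|].
    intros i Hi. destruct (Nat.lt_ge_cases i k1).
    + rewrite !Ti1 by lia. apply C1; lia.
    + rewrite !Ti2 by lia. replace (S i - k1)%nat with (S (i - k1)) by lia. apply C2; lia.
Qed.

Definition L (s : nat) : nat := (2 ^ (2 ^ s))%nat.
Definition V (s : nat) : nat := (L (S s) * L (S s))%nat.
Definition act (s : nat) : nat := (s - Nat.sqrt s * Nat.sqrt s + 1)%nat.
Definition stage (k : nat) : nat := Nat.log2 (Nat.log2 k).
Definition g (j k : nat) : nat :=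
  if Nat.eqb j (act (stage k)) then V (stage k - 1) else V (stage k).
Definition c (j k : nat) : nat := (k * g j k)%nat.
Definition line (j k : nat) (x : R) : R := 2 * INR k + x / 2 ^ (c j k).
Fixpoint minl (j n : nat) (x : R) : R :=
  match n with O => line j 0 x | S n' => Rmin (minl j n' x) (line j n x) end.
Definition Nc (x : R) : nat := Z.to_nat (up x).
Definition Sf (j : nat) (x : R) : R := minl j (Nc x) x.

Lemma L_mono s s' : (s <= s')%nat -> (L s <= L s')%nat.
Proof. intros; unfold L; apply Nat.pow_le_mono_r; [lia|]. apply Nat.pow_le_mono_r; lia. Qed.

Lemma V_mono s s' : (s <= s')%nat -> (V s <= V s')%nat.
Proof. intros; unfold V; apply Nat.mul_le_mono; apply L_mono; lia. Qed.

Lemma g_mono j k k' : (k <= k')%nat -> (g j k <= g j k')%nat.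
Proof.
  intros H. assert (Hs : (stage k <= stage k')%nat)
    by (unfold stage; do 2 apply Nat.log2_le_mono; lia).
  destruct (Nat.eq_dec (stage k) (stage k')) as [E|E].
  - unfold g; rewrite E; lia.
  - assert (H1 : (g j k <= V (stage k))%nat)
      by (unfold g; destruct (Nat.eqb j _); [apply V_mono; lia| lia]).
    assert (H2 : (V (stage k' - 1) <= g j k')%nat)
      by (unfold g; destruct (Nat.eqb j _); [lia | apply V_mono; lia]).
    assert (V (stage k) <= V (stage k' - 1))%nat by (apply V_mono; lia). lia.
Qed.

Lemma c_mono j k k' : (k <= k')%nat -> (c j k <= c j k')%nat.
Proof. intros H; unfold c. apply Nat.mul_le_mono; auto. apply g_mono; auto. Qed.

Lemma c_super j k m : (c j k + c j m <= c j (k + m))%nat.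
Proof.
  unfold c. pose proof (g_mono j k (k+m) ltac:(lia)). pose proof (g_mono j m (k+m) ltac:(lia)).
  assert (k * g j k <= k * g j (k+m))%nat by (apply Nat.mul_le_mono_l; auto).
  assert (m * g j m <= m * g j (k+m))%nat by (apply Nat.mul_le_mono_l; auto).
  rewrite Nat.mul_add_distr_r. lia.
Qed.

Lemma binv j k : 0 < / 2 ^ c j k <= 1.
Proof.
  split. apply Rinv_0_lt_compat, pow_lt; lra.
  rewrite <- Rinv_1; apply Rinv_le_contravar; [lra | apply pow_R1_Rle; lra].
Qed.

Lemma b0 j : / 2 ^ c j 0 = 1.
Proof. unfold c. rewrite Nat.mul_0_l. simpl. apply Rinv_1. Qed.

Lemma bmul j k m : / 2 ^ c j (k+m) <= / 2 ^ c j k * / 2 ^ c j m.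
Proof.
  rewrite <- Rinv_mult, <- pow_add. apply Rinv_le_contravar.
  - apply pow_lt; lra.
  - apply Rle_pow; [lra|]. apply c_super.
Qed.

Lemma line0 j x : line j 0 x = x.
Proof. unfold line. unfold Rdiv. rewrite b0. simpl. ring. Qed.

Lemma line_ge j k x : 0 <= x -> 2 * INR k <= line j k x.
Proof. intros Hx. unfold line, Rdiv. pose proof (binv j k). nra. Qed.

Lemma minl_le j n x k : (k <= n)%nat -> minl j n x <= line j k x.
Proof.
  induction n; intros Hk.
  - assert (k = 0%nat) by lia. subst. simpl. lra.
  - cbn [minl]. destruct (Nat.eq_dec k (S n)).
    + subst. apply Rmin_r.
    + eapply Rle_trans; [apply Rmin_l | apply IHn; lia].
Qed.

Lemma minl_att j n x : exists k, (k <= n)%nat /\ minl j n x = line j k x.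
Proof.
  induction n.
  - exists 0%nat. split; [lia | reflexivity].
  - destruct IHn as [k [Hk E]]. cbn [minl]. unfold Rmin. destruct (Rle_dec _ _).
    + exists k; split; [lia | auto].
    + exists (S n); split; [lia | auto].
Qed.

Lemma minl_stable j n m x : 0 <= x -> x <= 2 * INR (S n) -> (n <= m)%nat -> minl j m x = minl j n x.
Proof.
  intros Hx Hn. induction m; intros Hm.
  - assert (n = 0%nat) by lia. subst. reflexivity.
  - destruct (Nat.eq_dec n (S m)) as [E|E]; [subst; reflexivity|].
    cbn [minl]. rewrite IHm by lia. apply Rmin_left.
    pose proof (minl_le j n x 0 ltac:(lia)). rewrite line0 in H.
    pose proof (line_ge j (S m) x Hx).
    assert (INR (S n) <= INR (S m)) by (apply le_INR; lia). lra.
Qed.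

Lemma N_spec x : 0 <= x -> x < INR (Nc x).
Proof.
  intros Hx. destruct (archimed x) as [H1 H2]. unfold Nc.
  assert (0 < up x)%Z by (apply lt_0_IZR; lra).
  rewrite INR_IZR_INZ, Z2Nat.id by lia. lra.
Qed.

Lemma S_le_line j k x : 0 <= x -> Sf j x <= line j k x.
Proof.
  intros Hx. unfold Sf. destruct (le_lt_dec k (Nc x)).
  - apply minl_le; auto.
  - pose proof (minl_le j (Nc x) x 0 ltac:(lia)). rewrite line0 in H.
    pose proof (line_ge j k x Hx). pose proof (N_spec x Hx).
    assert (INR (Nc x) <= INR k) by (apply le_INR; lia). lra.
Qed.

Lemma S_att j x : exists k, Sf j x = line j k x.
Proof. unfold Sf. destruct (minl_att j (Nc x) x) as [k [_ E]]. eauto. Qed.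

Lemma S_eq_minl j x M : 0 <= x <= M -> Sf j x = minl j (Nc M) x.
Proof.
  intros [Hx HM]. unfold Sf.
  pose proof (N_spec x Hx). pose proof (N_spec M ltac:(lra)).
  rewrite <- (minl_stable j (Nc x) (Nat.max (Nc x) (Nc M)) x); auto; try lia.
  - apply minl_stable; auto; try lia. rewrite S_INR; lra.
  - rewrite S_INR; lra.
Qed.

Lemma Sf_pos j x : 0 < x -> 0 < Sf j x.
Proof.
  intros Hx. destruct (S_att j x) as [k E]. rewrite E. unfold line, Rdiv.
  pose proof (binv j k). pose proof (pos_INR k). nra.
Qed.

Lemma PL_minl j n a b : a < b -> PL (minl j n) a b.
Proof.
  intros Hab. induction n.
  - apply PL_one; auto. exists 1, 0. intros x _. simpl. rewrite line0. ring.
  - apply PL_ext with (fun x => Rmin (minl j n x) ((/ 2 ^ c j (S n)) * x + 2 * INR (S n))).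
    + apply PL_min; auto.
    + intros x _. cbn [minl]. unfold line. f_equal. unfold Rdiv. ring.
Qed.

Lemma lip j x y : 0 <= x -> 0 <= y -> Sf j y - Sf j x <= Rabs (y - x).
Proof.
  intros Hx Hy. destruct (S_att j x) as [k E]. pose proof (S_le_line j k y Hy).
  rewrite E. unfold line, Rdiv in *. pose proof (binv j k).
  pose proof (Rle_abs (y - x)). pose proof (Rabs_pos (y - x)). nra.
Qed.

Lemma Sf_submult j : submultiplicative_inf (Sf j).
Proof.
  repeat split.
  - intros M HM. destruct (Rle_lt_or_eq_dec 1 M HM) as [Hlt|Heq].
    + assert (P : PL (Sf j) 1 M).
      { apply PL_ext with (minl j (Nc M)). apply PL_minl; auto.
        intros x Hx. symmetry. apply S_eq_minl. lra. }
      destruct (PL_to _ _ _ P) as [k [t [_ H]]]. exists k, t. exact H.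
    + exists 0%nat, (fun _ => 1). split; [reflexivity|]. split; [auto|]. intros; lia.
  - intros x Hx eps He. exists eps. split; auto. intros y Hy Hxy.
    pose proof (lip j x y ltac:(lra) ltac:(lra)). pose proof (lip j y x ltac:(lra) ltac:(lra)).
    rewrite Rabs_minus_sym in H0.
    unfold Rabs at 1. destruct (Rcase_abs _); lra.
  - intros x y Hx Hxy. destruct (S_att j y) as [k E]. rewrite E.
    pose proof (S_le_line j k x ltac:(lra)). unfold line, Rdiv in *.
    pose proof (binv j k). nra.
  - intros x y l Hx Hy Hl. set (z := l * x + (1 - l) * y).
    destruct (S_att j z) as [k E]. rewrite E.
    pose proof (S_le_line j k x ltac:(lra)). pose proof (S_le_line j k y ltac:(lra)).
    unfold z, line, Rdiv in *. nra.
  - intros x Hx. apply Rle_antisym.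
    + pose proof (S_le_line j 0 x ltac:(lra)). rewrite line0 in H. auto.
    + destruct (S_att j x) as [k E]. rewrite E. destruct k.
      * rewrite line0; lra.
      * pose proof (line_ge j (S k) x ltac:(lra)). rewrite S_INR in H.
        pose proof (pos_INR k). lra.
  - intros x y Hx Hy. destruct (S_att j x) as [k Ek]. destruct (S_att j y) as [m Em].
    rewrite Ek, Em. eapply Rle_trans. apply (S_le_line j (k+m)). nra.
    unfold line, Rdiv. rewrite plus_INR.
    pose proof (bmul j k m). pose proof (binv j k). pose proof (binv j m). pose proof (binv j (k+m)).
    assert (Hq1 : x*y* / 2 ^ c j (k+m) <= x*y*(/ 2 ^ c j k * / 2 ^ c j m))
      by (apply Rmult_le_compat_l; nra).
    set (bk := / 2 ^ c j k) in *. set (bm := / 2 ^ c j m) in *.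
    assert (Hq2 : 2 * (INR k + INR m) <= 2 * INR k * (2 * INR m) + 2 * INR k * (y * bm) + x * bk * (2 * INR m)).
    { destruct k as [|k'].
      - unfold bk. rewrite b0. simpl. pose proof (pos_INR m). nra.
      - destruct m as [|m'].
        + unfold bm. rewrite b0. simpl (INR 0). pose proof (pos_INR (S k')). nra.
        + rewrite !S_INR. pose proof (pos_INR k'). pose proof (pos_INR m').
          assert (0 <= y * bm) by nra. assert (0 <= x * bk) by nra. nra. }
    nra.
Qed.

Lemma L_sq s : L (S s) = (L s * L s)%nat.
Proof. unfold L. rewrite Nat.pow_succ_r', Nat.mul_comm, Nat.pow_mul_r. simpl. lia. Qed.

Lemma L_big s : (s < L s)%nat.
Proof.
  unfold L. pose proof (Nat.pow_gt_lin_r 2 s ltac:(lia)).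
  pose proof (Nat.pow_gt_lin_r 2 (2^s) ltac:(lia)). lia.
Qed.

Lemma log2_pm1 e : (1 <= e)%nat -> Nat.log2 (2^e - 1) = (e - 1)%nat.
Proof.
  intros He. apply Nat.log2_unique; [lia|]. destruct e as [|e']; [lia|].
  replace (S e' - 1)%nat with e' by lia. rewrite Nat.pow_succ_r'.
  pose proof (Nat.pow_nonzero 2 e' ltac:(lia)). lia.
Qed.

Lemma stage_L s : stage (L s) = s.
Proof. unfold stage, L. rewrite !Nat.log2_pow2; lia. Qed.

Lemma stage_K s : stage (L (S s) - 1) = s.
Proof.
  unfold stage, L. rewrite log2_pm1.
  - rewrite log2_pm1; lia.
  - pose proof (Nat.pow_nonzero 2 (S s) ltac:(lia)). lia.
Qed.

Lemma act_spec j m : (1 <= j)%nat -> (j <= 2*m+1)%nat -> act (m*m + (j-1)) = j.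
Proof.
  intros. unfold act. rewrite (Nat.sqrt_unique (m*m + (j-1)) m); [lia|]. nia.
Qed.

Lemma fold_le (f : nat -> R) B x0 t : x0 <= B -> (forall i, In i t -> f i <= B) ->
  fold_right (fun i m => Rmax (f i) m) x0 t <= B.
Proof.
  induction t; simpl; intros; auto. apply Rmax_lub; auto.
Qed.

Lemma fold_ge (f : nat -> R) x0 t : x0 <= fold_right (fun i m => Rmax (f i) m) x0 t.
Proof.
  induction t; simpl; [lra|]. eapply Rle_trans; [apply IHt | apply Rmax_r].
Qed.

Lemma pow2R T : INR (2 ^ T) = 2 ^ T.
Proof. rewrite pow_INR. replace (INR 2) with 2 by (simpl; lra). reflexivity. Qed.

Lemma IZR_le_INR z : IZR z <= INR (Z.to_nat z).
Proof.
  destruct z; simpl Z.to_nat.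
  - simpl; lra.
  - rewrite INR_IZR_INZ, positive_nat_Z. lra.
  - apply Rle_trans with 0; [apply IZR_le; lia | apply pos_INR].
Qed.

Section Ratio.
Variables (j s : nat).
Hypotheses (Hs : (1 <= s)%nat) (Hact : act s = j).
Let K := (L (S s) - 1)%nat.
Let T := (c j K + K)%nat.

Lemma gK : g j K = V (s - 1).
Proof. unfold g, K. rewrite stage_K, Hact, Nat.eqb_refl. reflexivity. Qed.

Lemma gL i : i <> j -> g i (L s) = V s.
Proof.
  intros H. unfold g. rewrite stage_L, Hact. destruct (Nat.eqb_spec i j); [contradiction | reflexivity].
Qed.

Lemma lowb : INR K <= Sf j (INR (2 ^ T)).
Proof.
  rewrite pow2R. destruct (S_att j (2 ^ T)) as [k E]. rewrite E.
  assert (Hp : 0 <= 2 ^ T) by (apply pow_le; lra).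
  destruct (le_lt_dec k K).
  - pose proof (c_mono j k K l).
    assert (Hkl : INR K < 2 ^ K).
    { rewrite <- pow2R. apply lt_INR. apply Nat.pow_gt_lin_r; lia. }
    assert (H2 : 2 ^ T / 2 ^ c j K = 2 ^ K).
    { unfold T. rewrite pow_add. field. apply pow_nonzero; lra. }
    assert (H3 : 2 ^ T / 2 ^ c j K <= 2 ^ T / 2 ^ c j k).
    { unfold Rdiv. apply Rmult_le_compat_l; auto. apply Rinv_le_contravar.
      apply pow_lt; lra. apply Rle_pow; [lra | auto]. }
    pose proof (line_ge j k (2^T) Hp). unfold line in *. pose proof (pos_INR k). lra.
  - pose proof (line_ge j k (2^T) Hp). assert (INR K <= INR k) by (apply le_INR; lia).
    pose proof (pos_INR K). lra.
Qed.

Lemma upb i : i <> j -> Sf i (INR (2 ^ T)) <= 2 * INR (L s) + 1.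
Proof.
  intros Hi. rewrite pow2R.
  assert (Hp : 0 <= 2 ^ T) by (apply pow_le; lra).
  eapply Rle_trans; [apply (S_le_line i (L s)); auto|]. unfold line.
  assert (HT : (T <= c i (L s))%nat).
  { unfold T, c. rewrite gK, (gL i Hi). unfold V.
    replace (S (s - 1)) with s by lia. rewrite L_sq. unfold K. rewrite L_sq.
    pose proof (L_big s). set (X := L s) in *.
    assert (HX1 : (X * X >= 1)%nat) by nia.
    set (Y := (X * X - 1)%nat). assert (HY : (X * X = Y + 1)%nat) by lia. rewrite HY. nia. }
  assert (2 ^ T / 2 ^ c i (L s) <= 1).
  { unfold Rdiv. assert (0 < 2 ^ c i (L s)) by (apply pow_lt; lra).
    apply Rle_trans with (2 ^ c i (L s) * / 2 ^ c i (L s)).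
    - apply Rmult_le_compat_r. left; apply Rinv_0_lt_compat; auto. apply Rle_pow; [lra|auto].
    - rewrite Rinv_r; lra. }
  lra.
Qed.

Lemma K_val : INR K = INR (L s) * INR (L s) - 1.
Proof.
  unfold K. rewrite L_sq. pose proof (L_big s). rewrite minus_INR by nia. rewrite mult_INR. simpl. lra.
Qed.

End Ratio.

Theorem proposition2p6 :
  exists S : nat -> R -> R,
    (forall i : nat, (1 <= i)%nat -> submultiplicative_inf (S i)) /\
    forall (A : list nat),
      A <> nil ->
      (forall i, In i A -> (1 <= i)%nat) ->
      forall j : nat, (1 <= j)%nat -> ~ In j A ->
      forall K : R, exists n : nat, (1 <= n)%nat /\
        K < S j (INR n) / max_over (fun i => S i (INR n)) A.
Proof.
  exists Sf. split; [intros i _; apply Sf_submult|].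
  intros A HA _ j Hj HnA Kr.
  set (s0 := Z.to_nat (up (3 * Kr + 3))).
  set (m := (s0 + j + 1)%nat).
  set (s := (m * m + (j - 1))%nat).
  assert (Hact : act s = j) by (apply act_spec; lia).
  assert (Hs : (1 <= s)%nat) by (unfold s; nia).
  assert (Hss0 : (s0 <= s)%nat) by (unfold s, m; nia).
  set (Kn := (L (S s) - 1)%nat).
  set (T := (c j Kn + Kn)%nat).
  exists (2 ^ T)%nat. split.
  { pose proof (Nat.pow_nonzero 2 T ltac:(lia)). lia. }
  set (x := INR (2 ^ T)).
  assert (Hx : 0 < x) by (unfold x; rewrite pow2R; apply pow_lt; lra).
  pose proof (lowb j s Hs Hact) as Hlow. fold Kn T x in Hlow.
  pose proof (K_val j s Hs Hact) as HK. fold Kn in HK.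
  set (Ls := INR (L s)) in *.
  assert (HLs : 3 * Kr + 3 <= Ls).
  { pose proof (IZR_le_INR (up (3 * Kr + 3))). fold s0 in H.
    destruct (archimed (3 * Kr + 3)).
    assert (INR s0 <= Ls) by (unfold Ls; apply le_INR; pose proof (L_big s); lia). lra. }
  assert (HL3 : 3 <= Ls).
  { unfold Ls. pose proof (L_big s). assert (3 <= L s)%nat by (unfold s, m in *; nia).
    apply le_INR in H0. simpl in H0. lra. }
  destruct A as [|a t]; [congruence|].
  set (Mx := max_over (fun i => Sf i x) (a :: t)).
  assert (HM1 : 0 < Mx).
  { unfold Mx; simpl. eapply Rlt_le_trans; [apply (Sf_pos a x Hx) | apply fold_ge]. }
  assert (HM2 : Mx <= 2 * Ls + 1).
  { unfold Mx; simpl. apply fold_le.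
    - apply upb; auto. intro E; apply HnA; left; exact E.
    - intros i Hi. apply upb; auto. intro E; apply HnA; right; rewrite <- E; exact Hi. }
  assert (HKM : Kr * Mx < Sf j x).
  { destruct (Rle_dec Kr 0).
    - assert (0 < Sf j x) by (apply Sf_pos; auto). nra.
    - assert (Kr * Mx <= Kr * (2 * Ls + 1)) by (apply Rmult_le_compat_l; lra).
      assert (Ls * (Kr + 3) <= Ls * (Ls - 2 * Kr)) by (apply Rmult_le_compat_l; lra).
      assert (3 * (Kr + 3) <= Ls * (Kr + 3)) by (apply Rmult_le_compat_r; lra).
      lra. }
  apply Rmult_lt_reg_r with Mx; auto. unfold Rdiv. rewrite Rmult_assoc, Rinv_l by lra. lra.
Qed.
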